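(* $\mathfrak{Z}(\mathcal{S})\leq(2^{\aleph_0})^+$; that is, every separable LMP $\mathbb{S}$ satisfies $\mathfrak{Z}(\mathbb{S})\leq(2^{\aleph_0})^+$.
   Context: An LMP is a triple $\mathbb{S}=(S,\Sigma,\{\tau_a\mid a\in L\})$ with $(S,\Sigma)$ a measurable space, $L$ a countable label set, and each $\tau_a:S\times\Sigma\to[0,1]$ a Markov kernel (subprobability measure in the second argument, measurable in the first). It is separable if $\Sigma$ is countably generated and separates points of $S$. For $R\subseteq S\times S$, $\Sigma(R)$ is the family of $R$-closed sets in $\Sigma$ ($A$ is $R$-closed if $x\in A$, $xRs$ imply $s\in A$). $\mathcal{R}(\Gamma)=\{(s,t):\forall A\in\Gamma\,(s\in A\iff t\in A)\}$; $\mathcal{R}^T(\Lambda)=\{(s,t):\forall a\,\forall E\in\Lambda\ \tau_a(s,E)=\tau_a(t,E)\}$; $\mathcal{O}(R)=\mathcal{R}^T(\Sigma(R))$, with iterates $\mathcal{O}^0(R)=R$, $\mathcal{O}^{\alpha+1}(R)=\mathcal{O}(\mathcal{O}^\alpha(R))$, $\mathcal{O}^\lambda(R)=\bigcap_{\alpha<\lambda}\mathcal{O}^\alpha(R)$ for limit $\lambda$. Event bisimilarity ${\sim_e}=\mathcal{R}(\sigma(\llbracket\mathcal{L}\rrbracket))$, where $\sigma(\llbracket\mathcal{L}\rrbracket)$ is the $\sigma$-algebra generated by the denotations of formulas $\phi::=\top\mid\phi\wedge\psi\mid\langle a\rangle_{>q}\phi$ ($q\in\mathbb{Q}\cap[0,1]$),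 $\llbracket\langle a\rangle_{>q}\phi\rrbracket=\{s:\tau_a(s,\llbracket\phi\rrbracket)>q\}$. A state bisimulation is a symmetric $R$ with $sRt$, $C\in\Sigma(R)$ implying $\tau_a(s,C)=\tau_a(t,C)$ for all $a$; state bisimilarity $\sim_s$ is the union of all state bisimulations. The Zhou ordinal $\mathfrak{Z}(\mathbb{S})$ is the least $\alpha$ with $\mathcal{O}^\alpha(\sim_e)={\sim_s}$ (it exists). $\mathfrak{Z}(\mathcal{S})$ is the supremum of $\mathfrak{Z}(\mathbb{S})$ over all separable LMPs $\mathbb{S}$. *)

(* Defs.v *)
From HB Require Import structures.
From mathcomp Require Import all_boot all_order all_algebra.
From mathcomp Require Import all_classical all_reals.
From mathcomp Require Import ereal measure kernel.
Set Implicit Arguments. Unset Strict Implicit. Unset Printing Implicit Defensive.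
Import Order.TTheory GRing.Theory Num.Theory.
Local Open Scope classical_set_scope.
Local Open Scope ring_scope.
Local Open Scope card_scope.

Section LMP.
Context {d : measure_display} {T : measurableType d} {R : realType}
  {L : countType} (tau : L -> R.-spker T ~> T).

Definition relT := T -> T -> Prop.

Definition closed_by (Rel : relT) (A : set T) := forall x s, A x -> Rel x s -> A s.

Definition SigmaR (Rel : relT) : set (set T) :=
  [set A | measurable A /\ closed_by Rel A].

Definition RelOf (Gamma : set (set T)) : relT :=
  fun s t => forall A, Gamma A -> (A s <-> A t).

Definition RelT (Lambda : set (set T)) : relT :=
  fun s t => forall a E, Lambda E -> tau a s E = tau a t E.

Definition Oop (Rel : relT) : relT := RelT (SigmaR Rel).

Inductive formula :=
| fTop : formula
| fAnd : formula -> formula -> formula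
| fDiam : L -> rat -> formula -> formula.

Fixpoint wf_formula (f : formula) : Prop :=
  match f with
  | fTop => True
  | fAnd f1 f2 => wf_formula f1 /\ wf_formula f2
  | fDiam _ q g => (0 <= q <= 1)%R /\ wf_formula g
  end.

Fixpoint denot (f : formula) : set T :=
  match f with
  | fTop => setT
  | fAnd f1 f2 => denot f1 `&` denot f2
  | fDiam a q g => [set s | ((ratr q)%:E < tau a s (denot g))%E]
  end.

Definition event_bisim : relT :=
  RelOf (<<s [set denot f | f in wf_formula] >>).

Definition state_bisimulation (Rel : relT) :=
  (forall s t, Rel s t -> Rel t s) /\
  (forall s t C a, Rel s t -> SigmaR Rel C -> tau a s C = tau a t C).

Definition state_bisim : relT :=
  fun s t => exists Rel, state_bisimulation Rel /\ Rel s t.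

End LMP.

Definition separable {d : measure_display} (T : measurableType d) :=
  (exists G : set (set T), countable G /\ (@measurable d T) = <<s G >>) /\
  (forall x y : T, x <> y -> exists A, measurable A /\ A x /\ ~ A y).

Definition strict_wellorder {W : Type} (lt : W -> W -> Prop) :=
  well_founded lt /\
  (forall i j k, lt i j -> lt j k -> lt i k) /\
  (forall i j, lt i j \/ i = j \/ lt j i).

(* F is the transfinite iteration O^i(R0) along the well-order lt:
   O^0 = R0, O^(p+1) = O(O^p), O^lambda = intersection of earlier ones. *)
Definition is_transfinite_iter {W : Type} (lt : W -> W -> Prop) {X : Type}
  (O : (X -> X -> Prop) -> (X -> X -> Prop)) (R0 : X -> X -> Prop)
  (F : W -> X -> X -> Prop) :=
  forall i,
    ((forall j, ~ lt j i) -> F i = R0) /\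
    (forall p, lt p i -> (forall j, lt j i -> j = p \/ lt j p) -> F i = O (F p)) /\
    ((exists j, lt j i) -> (forall p, lt p i -> exists j, lt p j /\ lt j i) ->
       F i = fun s t => forall j, lt j i -> F j s t).

(* (W, lt) has order type (2^aleph0)^+ + 1 with greatest element top:
   the segment below top has cardinality > 2^aleph0, every proper
   initial segment below top has cardinality <= 2^aleph0. *)
Definition order_type_succ_cont_plus_one {W : Type} (lt : W -> W -> Prop)
  (top : W) :=
  strict_wellorder lt /\
  (forall i, i = top \/ lt i top) /\
  ~ ([set j | lt j top] #<= [set: nat -> bool]) /\
  (forall i, lt i top -> [set j | lt j i] #<= [set: nat -> bool]).

(* Main.v *)
Require Import Defs.
From HB Require Import structures.
From mathcomp Require Import all_boot all_order all_algebra.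
From mathcomp Require Import all_classical all_reals.
From mathcomp Require Import ereal measure kernel measurable_realfun.
Set Implicit Arguments. Unset Strict Implicit. Unset Printing Implicit Defensive.
Import Order.TTheory GRing.Theory Num.Theory.
Section All.
Local Open Scope classical_set_scope.
Local Open Scope ring_scope.

Section S.
Context {d : measure_display} {T : measurableType d} {R : realType}
  {L : countType} (tau : L -> R.-spker T ~> T).

Lemma measurable_denot f : measurable (denot tau f).
Proof.
elim: f => [|f1 IH1 f2 IH2|a q g IH] /=.
- exact: measurableT.
- exact: measurableI.
- have mf := measurable_kernel (tau a) _ IH.
  have := mf measurableT `]((ratr q)%:E), +oo[%classic (emeasurable_itv _).
  rewrite setTI; congr measurable; apply/seteqP; split => x /=;
  by rewrite in_itv /= andbT.
Qed.

Definition Gen := [set denot tau f | f in (@wf_formula L)].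

Lemma Gen_meas : <<s Gen >> `<=` measurable.
Proof.
apply: smallest_sub; first exact: sigma_algebra_measurable.
by move=> _ [f _ <-]; exact: measurable_denot.
Qed.

Lemma sigma_agree (H : set (set T)) x y :
  (forall A, H A -> (A x <-> A y)) -> forall A, <<s H >> A -> (A x <-> A y).
Proof.
move=> HH; apply: (@smallest_sub _ _ _ [set A | A x <-> A y]) => //; split => //.
- by move=> A /= [Ax Ay]; split => -[_ nA]; split => // ?; apply: nA; [apply: Ay|apply: Ax].
- move=> F HF; split => -[n _ Fn]; exists n => //; by apply HF.
Qed.

Lemma closed_sigma (Rel : T -> T -> Prop) : (forall s t, Rel s t -> Rel t s) ->
  sigma_algebra setT (SigmaR Rel).
Proof.
move=> sym; split.
- by split => //; move=> x s [].
- move=> A [mA cA]; split; first exact: measurableD.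
  move=> x s [_ nA] xs; split => // As; apply: nA; exact: cA (sym _ _ xs).
- move=> F HF; split; first by apply: bigcup_measurable => n _; case: (HF n).
  move=> x s [n _ Fn] xs; exists n => //; by case: (HF n) => _ c; apply: c xs.
Qed.

Lemma denot_closed (Rel : T -> T -> Prop) : state_bisimulation tau Rel ->
  forall f, closed_by Rel (denot tau f).
Proof.
move=> [sym bis]; elim => [|f1 IH1 f2 IH2|a q g IH] /=.
- by [].
- by move=> x s [h1 h2] xs; split; [apply: IH1 xs|apply: IH2 xs].
- move=> x s /= h xs; rewrite -(bis _ _ _ a xs) //; split => //.
  exact: measurable_denot.
Qed.

Lemma state_event s t : state_bisim tau s t -> event_bisim tau s t.
Proof.
move=> [Rel [[sym bis] Rst]].
have sub : <<s Gen >> `<=` SigmaR Rel.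
  apply: smallest_sub; first exact: closed_sigma.
  move=> _ [f _ <-]; split; first exact: measurable_denot.
  exact: denot_closed.
move=> A /sub [_ cA]; split => h; [exact: cA h Rst | exact: cA h (sym _ _ Rst)].
Qed.

Lemma event_sym s t : event_bisim tau s t -> event_bisim tau t s.
Proof. by move=> h A HA; split => /(h A HA). Qed.

Lemma Oop_sym (Rl : T -> T -> Prop) s t : Oop tau Rl s t -> Oop tau Rl t s.
Proof. by move=> h a E HE; rewrite (h a E HE). Qed.

Lemma O_event s t : Oop tau (event_bisim tau) s t -> event_bisim tau s t.
Proof.
move=> h.
have key : forall f, wf_formula f -> (denot tau f s <-> denot tau f t).
  elim => [|f1 IH1 f2 IH2|a q g IH] /=.
  - by [].
  - move=> [w1 w2]; split => -[h1 h2]; split; by [apply/IH1|apply/IH2].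
  - move=> [_ wg]; rewrite (h a (denot tau g)) //; split.
      by apply: Gen_meas; apply: sub_sigma_algebra; exists g.
    move=> x y gx xy; have GA : <<s Gen >> (denot tau g).
      by apply: sub_sigma_algebra; exists g.
    by have := xy (denot tau g) GA => /iffLR; apply.
apply: sigma_agree => _ [f wf <-]; exact: key.
Qed.

Lemma O_mono (R1 R2 : T -> T -> Prop) : (forall s t, R1 s t -> R2 s t) ->
  forall s t, Oop tau R1 s t -> Oop tau R2 s t.
Proof.
move=> sub s t h a E [mE cE]; apply: h; split => // x y Ex xy.
exact: cE Ex (sub _ _ xy).
Qed.

Lemma state_O (Rl : T -> T -> Prop) : (forall s t, state_bisim tau s t -> Rl s t) ->
  forall s t, state_bisim tau s t -> Oop tau Rl s t.
Proof.
move=> sub s t [Rel [[sym bis] Rst]] a E [mE cE]; apply: (bis _ _ _ _ Rst); split => //.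
move=> x y Ex xy; apply: cE Ex _; apply: sub; exists Rel; split => //.
Qed.

Lemma fix_state (Rl : T -> T -> Prop) : (forall s t, Rl s t -> Rl t s) ->
  (forall s t, Rl s t -> Oop tau Rl s t) ->
  forall s t, Rl s t -> state_bisim tau s t.
Proof.
move=> sym fx s t Rst; exists Rl; split => //; split => // x y C a xy HC.
exact: fx.
Qed.
End S.

Section Ord.
Context {W : Type} (lt : W -> W -> Prop) (wo : strict_wellorder lt).

Lemma lt_irr i : ~ lt i i.
Proof.
case: wo => wf _; elim: (wf i) => {}i _ IH h; exact: (IH i h h).
Qed.

Lemma lt_asym i j : lt i j -> ~ lt j i.
Proof. case: wo => _ [tr _] h1 h2; exact: (lt_irr (tr _ _ _ h1 h2)). Qed.

Lemma wf_min (P : W -> Prop) i : P i -> exists m, P m /\ forall k, lt k m -> ~ P k.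
Proof.
case: wo => wf _ Pi; apply: contrapT => hn.
suff : forall x, ~ P x by move=> /(_ i).
move=> x; elim: (wf x) => {}x _ IH Px; apply: hn; exists x; split; first by [].
move=> k kx Pk; exact: IH kx Pk.
Qed.

Lemma cases3 i : (forall j, ~ lt j i) \/
  (exists p, lt p i /\ forall j, lt j i -> j = p \/ lt j p) \/
  ((exists j, lt j i) /\ forall p, lt p i -> exists j, lt p j /\ lt j i).
Proof.
case: (pselect (exists j, lt j i)) => [ex|nex]; last first.
  by left => j h; apply: nex; exists j.
case: (pselect (exists p, lt p i /\ forall j, lt j i -> j = p \/ lt j p)) => [m|nm].
  by right; left.
right; right; split => // p pi; apply: contrapT => hn; apply: nm; exists p.
split => // j ji; have [_ [_ tri]] := wo; case: (tri j p) => [|[|pj]].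
- by right.
- by left.
- by exfalso; apply: hn; exists j.
Qed.

Lemma succ_ex i k : lt i k -> exists s, lt i s /\ (forall j, lt j s -> j = i \/ lt j i)
  /\ (s = k \/ lt s k).
Proof.
move=> ik; have [s [is_ ms]] := wf_min (P := fun x => lt i x) ik.
exists s; split => //; have [_ [_ tri]] := wo; split.
  move=> j js; case: (tri j i) => [|[|ij]]; [by right|by left|].
  by exfalso; exact: ms js ij.
case: (tri s k) => [|[|ks]]; [by right|by left|].
by exfalso; exact: ms ks ik.
Qed.
End Ord.

Definition code (a b : nat -> bool) : nat -> bool :=
  fun n => if odd n then b n./2 else a n./2.

Lemma code_inj a b a' b' : code a b = code a' b' -> a = a' /\ b = b'.
Proof.
move=> e; split; apply/funext => n.
- by have := congr1 (fun g => g n.*2) e; rewrite /code odd_double doubleK.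
- have := congr1 (fun g => g n.*2.+1) e; rewrite /code /= odd_double /=.
  by rewrite uphalf_double.
Qed.

Lemma sep_inj {d : measure_display} {T : measurableType d} :
  separable T -> exists h : T -> (nat -> bool), injective h.
Proof.
move=> [[G0 [cG mE]] sep]; case/countable_injP: cG => f finj.
exists (fun x n => `[< exists A, G0 A /\ f A = n /\ A x >]).
move=> x y hxy; apply: contrapT => nxy.
have [A [mA [Ax nAy]]] := sep x y nxy.
suff agree : forall B, G0 B -> (B x <-> B y).
  by rewrite mE in mA; apply: nAy; have := sigma_agree agree mA => /iffLR; apply.
move=> B G0B.
have ch : forall z, (exists A, G0 A /\ f A = f B /\ A z) <-> B z.
  move=> z; split; last by move=> Bz; exists B.
  move=> [A' [GA' [fA' A'z]]].
  by rewrite -(finj A' B (mem_set GA') (mem_set G0B) fA').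
have e := congr1 (fun g => g (f B)) hxy; move: e => /= e.
split => Bz.
- have : `[< exists A, G0 A /\ f A = f B /\ A x >] by apply/asboolP; apply/ch.
  by rewrite e => /asboolP /ch.
- have : `[< exists A, G0 A /\ f A = f B /\ A y >] by apply/asboolP; apply/ch.
  by rewrite -e => /asboolP /ch.
Qed.

Section Main.
Context {d : measure_display} {T : measurableType d} {R : realType}
  {L : countType} (tau : L -> R.-spker T ~> T).
Context {W : Type} (lt : W -> W -> Prop) (wo : strict_wellorder lt)
  (F : W -> T -> T -> Prop)
  (iter : is_transfinite_iter lt (Oop tau) (event_bisim tau) F).

Lemma F_props j :
  (forall s t, state_bisim tau s t -> F j s t) /\ (forall s t, F j s t -> F j t s) /\
  (forall s t, Oop tau (F j) s t -> F j s t) /\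
  (forall i, lt i j -> forall s t, F j s t -> F i s t).
Proof.
have wf := wo.1.
elim/(well_founded_ind wf): j => j IH.
have [h0 [h1 h2]] := iter j.
case: (cases3 wo j) => [nj|[[p [pj mp]]|[exj lim]]].
- rewrite (h0 nj); split; first exact: state_event.
  split; first exact: event_sym.
  split; first exact: O_event.
  by move=> i ij; exfalso; exact: nj ij.
- have [Ps [Psy [PO Pd]]] := IH p pj.
  have Fj := h1 p pj mp; rewrite Fj.
  split; first exact: state_O.
  split; first exact: Oop_sym.
  split; first by apply: O_mono.
  move=> i ij s t h; case: (mp i ij) => [->|ip]; first exact: PO.
  exact: Pd ip _ _ (PO _ _ h).
- have Fj := h2 exj lim; rewrite Fj.
  split; first by move=> s t st k kj; have [+ _] := IH k kj; apply.
  split; first by move=> s t st k kj; have [_ [+ _]] := IH k kj; apply; apply: st.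
  split; last by move=> i ij s t; apply.
  move=> s t h k kj; have [k' [kk' k'j]] := lim k kj.
  have [_ [_ [PO Pd]]] := IH k' k'j.
  apply: Pd kk' _ _ _; apply: PO; apply: O_mono h => x y; exact.
Qed.
End Main.

End All.
Unset Implicit Arguments.

Theorem lemma4p5 (d : measure_display) (T : measurableType d) (R : realType)
  (L : countType) (tau : L -> R.-spker T ~> T)
  (W : Type) (lt : W -> W -> Prop) (top : W)
  (F : W -> T -> T -> Prop) :
  separable T ->
  order_type_succ_cont_plus_one lt top ->
  is_transfinite_iter lt (Oop tau) (event_bisim tau) F ->
  exists i : W, F i = state_bisim tau.
Proof.
move=> sepT [wo [topmax [notle segle]]] iter.
have [h hinj] := sep_inj sepT.
have FP := F_props wo iter.
apply: contrapT => hn; apply: notle.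
pose P i b := exists s x y, (lt i s /\ (forall j, lt j s -> j = i \/ lt j i)
   /\ (s = top \/ lt s top)) /\ F i x y /\ ~ F s x y /\ b = code (h x) (h y).
have key : forall i, exists b, lt i top -> P i b.
  move=> i; case: (pselect (lt i top)) => [it|nit]; last first.
    by exists (fun _ => false).
  have [s [is_ [ms stop]]] := succ_ex wo it.
  have Fs : F s = Oop tau (F i) by have [_ [+ _]] := iter s; apply.
  apply: contrapT => nb; apply: hn; exists i.
  have [Ps [Psy [PO Pd]]] := FP i.
  have sub : forall x y, F i x y -> F s x y.
    move=> x y Fxy; apply: contrapT => nF; apply: nb.
    exists (code (h x) (h y)) => _; exists s, x, y; split => //.
  apply/funext => x; apply/funext => y; apply/propext; split; last exact: Ps.
  apply: fix_state => //; move=> a b ab; rewrite -Fs; exact: sub.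
pose phi i := proj1_sig (cid (key i)).
have phiP : forall i, lt i top -> P i (phi i) by move=> i; exact: (proj2_sig (cid (key i))).
have wlog_ : forall i k b, lt i k -> P i b -> P k b -> False.
  move=> i k b ik [s [x [y [[is_ [ms stop]] [Fi [nFs eb]]]]]]
    [s' [x' [y' [_ [Fk [_ eb']]]]]].
  rewrite eb in eb'; have [/hinj ex /hinj ey] := code_inj eb'.
  subst x' y'; apply: nFs.
  have [|sk] : s = k \/ lt s k.
    have [_ [_ tri]] := wo; case: (tri s k) => [|[|ks]]; [by right|by left|].
    exfalso; case: (ms k ks) => ki.
      by rewrite ki in ik; exact: (lt_irr wo ik).
    exact: (lt_asym wo ik ki).
  - by move=> ->.
  - by have [_ [_ [_ Pd]]] := FP k; exact: Pd sk _ _ Fk.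
apply/pcard_injP; exists phi => i k /set_mem it /set_mem kt e.
have [_ [_ tri]] := wo; case: (tri i k) => [ik|[//|ki]].
- by exfalso; apply: (wlog_ i k (phi i) ik (phiP i it)); rewrite e; exact: phiP.
- by exfalso; apply: (wlog_ k i (phi k) ki (phiP k kt)); rewrite -e; exact: phiP.
Qed.
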